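(* Fix $\beta>0$ and an MDP with a sink state as in the context. For each $t\in\mathbb N$, each stationary policy $\pi=(\bm d)_\infty\in\Pi_{\mathrm{SR}}$ and each probability vector $\bm\eta\in\Delta^S$: \[ \bm\eta^\top(\bm B^{\bm d})^t\bm b^{\bm d}=0\quad\Longleftrightarrow\quad\bm\eta^\top(\bm P^{\bm d})^t\bm p^{\bm d}=0. \]
   Context: MDP: states $\mathcal S=\{1,\dots,S\}$ plus sink state $e$; finite actions; transitions $p(s,a,s')$, real rewards $r(s,a,s')$. $\Pi_{\mathrm{SR}}$: stationary randomized policies $(\bm d)_\infty$, $d_a(s)$ the probability of action $a$ in $s$. $B^{\bm d}_{s,s'}=\sum_a p(s,a,s')d_a(s)e^{-\beta r(s,a,s')}$, $b^{\bm d}_s=\sum_a p(s,a,e)d_a(s)e^{-\beta r(s,a,e)}$, $P^{\bm d}_{s,s'}=\sum_a d_a(s)p(s,a,s')$, $p^{\bm d}_s=\sum_a d_a(s)p(s,a,e)$ for $s,s'\in\mathcal S$. $\Delta^S$ is the probability simplex in $\mathbb R^S$. *)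

(* Defs.v *)
From mathcomp Require Import all_boot all_order all_algebra.
From mathcomp Require Import reals.
From mathcomp.analysis Require Import sequences exp.
Set Implicit Arguments. Unset Strict Implicit. Unset Printing Implicit Defensive.
Import Order.TTheory GRing.Theory Num.Theory.
Local Open Scope ring_scope.

(* States 1..S are 'I_S; the full state space including the sink e is
   option 'I_S, with None = e.  Actions range over a finite type A. *)

Definition is_transition (R : realType) (S : nat) (A : finType)
  (p : 'I_S -> A -> option 'I_S -> R) : Prop :=
  (forall s a s', 0 <= p s a s') /\ (forall s a, \sum_(s' : option 'I_S) p s a s' = 1).

Definition is_decision_rule (R : realType) (S : nat) (A : finType)
  (d : 'I_S -> A -> R) : Prop :=
  (forall s a, 0 <= d s a) /\ (forall s, \sum_(a : A) d s a = 1).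

Definition in_simplex (R : realType) (S : nat) (eta : 'rV[R]_S) : Prop :=
  (forall i, 0 <= eta 0 i) /\ \sum_(i < S) eta 0 i = 1.

Section MDPmats.
Variables (R : realType) (S : nat) (A : finType).
Variables (p : 'I_S -> A -> option 'I_S -> R) (r : 'I_S -> A -> option 'I_S -> R).
Variables (beta : R) (d : 'I_S -> A -> R).

Definition Bmx : 'M[R]_S :=
  \matrix_(s, s') \sum_(a : A) p s a (Some s') * d s a * expR (- beta * r s a (Some s')).
Definition bvec : 'cV[R]_S :=
  \col_s \sum_(a : A) p s a None * d s a * expR (- beta * r s a None).
Definition Pmx : 'M[R]_S := \matrix_(s, s') \sum_(a : A) d s a * p s a (Some s').
Definition pvec : 'cV[R]_S := \col_s \sum_(a : A) d s a * p s a None.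
End MDPmats.

(* matrix power M^t (valid for any size S, including 0) *)
Definition mxpow (R : ringType) (S : nat) (M : 'M[R]_S) (t : nat) : 'M[R]_S :=
  iter t (mulmx M) 1%:M.

(* Main.v *)
Require Import Defs.
From mathcomp Require Import all_boot all_order all_algebra.
From mathcomp Require Import reals.
From mathcomp.analysis Require Import sequences exp.
Import GRing.Theory Num.Theory.
Local Open Scope ring_scope.

Definition ss {R : realType} (x y : R) := 0 <= x /\ 0 <= y /\ (x = 0 <-> y = 0).

Lemma ss_sum (R : realType) (I : finType) (f g : I -> R) :
  (forall i, ss (f i) (g i)) -> ss (\sum_i f i) (\sum_i g i).
Proof.
move=> H; split; [|split].
- by apply: sumr_ge0 => i _; case: (H i).
- by apply: sumr_ge0 => i _; case: (H i) => _ [].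
- split=> E.
  + apply: big1 => i _; have [_ [_ [h1 h2]]] := H i; apply: h1.
    by apply: (psumr_eq0P _ E) => // j _; case: (H j).
  + apply: big1 => i _; have [_ [_ [h1 h2]]] := H i; apply: h2.
    by apply: (psumr_eq0P _ E) => // j _; case: (H j) => _ [].
Qed.

Lemma ss_mul (R : realType) (a b c e : R) : ss a b -> ss c e -> ss (a * c) (b * e).
Proof.
move=> [a0 [b0 [h1 h2]]] [c0 [e0 [k1 k2]]]; split; [exact: mulr_ge0|split; [exact: mulr_ge0|]].
split=> /eqP; rewrite mulf_eq0; case/orP => /eqP E; apply/eqP; rewrite mulf_eq0.
- by rewrite (h1 E) eqxx.
- by rewrite (k1 E) eqxx orbT.
- by rewrite (h2 E) eqxx.
- by rewrite (k2 E) eqxx orbT.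
Qed.

Lemma ss_refl (R : realType) (x : R) : 0 <= x -> ss x x.
Proof. by move=> h; split; [|split]. Qed.

Definition ssm {R : realType} {m n} (X Y : 'M[R]_(m, n)) := forall i j, ss (X i j) (Y i j).

Lemma ssm_mul (R : realType) m n k (X Y : 'M[R]_(m, n)) (M N : 'M[R]_(n, k)) :
  ssm X Y -> ssm M N -> ssm (X *m M) (Y *m N).
Proof.
move=> H1 H2 i j; rewrite !mxE; apply: ss_sum => l; exact: ss_mul.
Qed.

Lemma ssm_pow (R : realType) S (B P : 'M[R]_S) t :
  ssm B P -> forall (u v : 'rV[R]_S), ssm u v -> ssm (u *m mxpow B t) (v *m mxpow P t).
Proof.
move=> HBP; elim: t => [|t IH] u v Huv.
- by rewrite /mxpow /= !mulmx1.
- rewrite /mxpow /= !mulmxA; apply: IH; exact: ssm_mul.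
Qed.

Lemma mx11_eq0 (R : realType) (X Y : 'M[R]_1) :
  (X 0 0 = 0 <-> Y 0 0 = 0) -> (X = 0 <-> Y = 0).
Proof.
move=> [h1 h2]; split => E; apply/matrixP => i j; rewrite (ord1 i) (ord1 j) mxE.
- by apply: h1; rewrite E mxE.
- by apply: h2; rewrite E mxE.
Qed.

Theorem lemma8 (R : realType) (S : nat) (A : finType)
  (p : 'I_S -> A -> option 'I_S -> R) (r : 'I_S -> A -> option 'I_S -> R)
  (beta : R) (hbeta : 0 < beta) (hp : is_transition p)
  (t : nat) (d : 'I_S -> A -> R) (hd : is_decision_rule d)
  (eta : 'rV[R]_S) (heta : in_simplex eta) :
  (eta *m mxpow (Bmx p r beta d) t *m bvec p r beta d = 0)
  <-> (eta *m mxpow (Pmx p d) t *m pvec p d = 0).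
Proof.
case: hp => hp0 _; case: hd => hd0 _; case: heta => he0 _.
have key : forall s a o, ss (p s a o * d s a * expR (- beta * r s a o)) (d s a * p s a o).
  move=> s a o; rewrite (mulrC (d s a)) -[X in ss _ X]mulr1.
  apply: ss_mul; first by apply: ss_mul; apply: ss_refl.
  have he := expR_gt0 (- beta * r s a o).
  split; first exact: Order.POrderTheory.ltW.
  split => //; split => E.
  - by move: he; rewrite E Order.POrderTheory.ltxx.
  - by move/eqP: E; rewrite oner_eq0.
have H1 : ssm (Bmx p r beta d) (Pmx p d).
  by move=> i j; rewrite !mxE; apply: ss_sum => a; apply: key.
have H2 : ssm (bvec p r beta d) (pvec p d).
  by move=> i j; rewrite !mxE; apply: ss_sum => a; apply: key.
have H0 : ssm eta eta by move=> i j; rewrite (ord1 i); split; [|split].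
have := @ssm_mul _ _ _ _ _ _ _ _ (@ssm_pow _ _ _ _ t H1 _ _ H0) H2 0 0.
move=> [_ [_ H]].
apply: mx11_eq0. exact: H.
Qed.
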